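(* The $(T,* )$-ideal $I(G,* )$ is generated, as a $(T,* )$-ideal, by its elements of the form $$f=\sum_{\alpha\in W_n} a_\alpha\,\alpha\big(x_{1,\sigma_1}x_{2,\sigma_2}\cdots x_{n,\sigma_n}\big),$$ where $n\ge 1$, $\sigma_1,\dots,\sigma_n\in G$ and $a_\alpha\in\mathbb{Q}$.
   Context: Let $G=\{g_1=e,g_2,\dots,g_k\}$ be a finite group of order $k$. Index the rows and columns of $k\times k$ complex matrices by $G$, let $E_{a,b}$ ($a,b\in G$) be the matrix units, and for $g\in G$ let $P_g=\sum_{h\in G}E_{h,hg}$. The $G$-crossed-product grading on $M_k(\mathbb{C})$ is $M_k(\mathbb{C})=\bigoplus_{g\in G}M_k(\mathbb{C})_g$ with $M_k(\mathbb{C})_g=\{DP_g: D \text{ diagonal}\}$. The involution $*$ on $M_k(\mathbb{C})$ is the transpose. Let $F=\mathbb{Q}\{x_{i,g},x_{i,g}^*: i\ge1, g\in G\}$ be the free associative $\mathbb{Q}$-algebra on these symbols, with the involution $*$ (the $\mathbb{Q}$-linear anti-automorphism of order 2 exchanging $x_{i,g}$ and $x_{i,g}^*$) and the $G$-grading $\deg x_{i,g}=g$, $\deg x_{i,g}^*=g^{-1}$. A graded $*$-identity is an $f\in F$ that vanishes under every substitution $x_{i,g}\mapsto A_{i,g}$, $x^*_{i,g}\mapsto A_{i,g}^{T}$ with $A_{i,g}\in M_k(\mathbb{C})_g$; $I(G,* )$ denotes the set of all graded $*$-identities. A $(T,* )$-ideal is an ideal of $F$ stable under $*$ and under every algebra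 endomorphism $\varphi$ of $F$ such that $\varphi(x_{i,g})$ is homogeneous of degree $g$ and $\varphi(x^*_{i,g})=\varphi(x_{i,g})^*$ for all $i,g$. Let $W_n=S_n\times C_2^n$ with $C_2=\{1,-1\}$. For $\alpha=(\pi,\gamma)$, $\gamma=(\gamma_1,\dots,\gamma_n)$, and a monomial $m=x_{i_1,\sigma_{i_1}}^{\epsilon_{i_1}}\cdots x_{i_n,\sigma_{i_n}}^{\epsilon_{i_n}}$ with $\{i_1,\dots,i_n\}=\{1,\dots,n\}$ and each $\epsilon_j\in\{\text{nothing},*\}$, define $\alpha(m)=x_{\pi(i_1),\sigma_{\pi(i_1)}}^{\delta_{\pi(i_1)}}\cdots x_{\pi(i_n),\sigma_{\pi(i_n)}}^{\delta_{\pi(i_n)}}$, where $\delta_j=\epsilon_j$ if $\gamma_j=1$ and $\delta_j$ is the other element of $\{\text{nothing},*\}$ if $\gamma_j=-1$. *)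

(* Defs.v *)
From HB Require Import structures.
From mathcomp Require Import all_boot all_order all_fingroup all_algebra all_field.
Set Implicit Arguments. Unset Strict Implicit. Unset Printing Implicit Defensive.
Import Order.TTheory GRing.Theory Num.Theory.
Local Open Scope ring_scope.

Section FreeStarAlg.
Variable gT : finGroupType.

(* A letter (i, g, b) stands for x_{i,g} if b = false and x_{i,g}^* if b = true. *)
Definition letter := (nat * gT * bool)%type.
Definition lidx (l : letter) : nat := l.1.1.
Definition lgrp (l : letter) : gT := l.1.2.
Definition lstar (l : letter) : bool := l.2.

(* monomials (words) and elements of F = Q{x_{i,g}, x_{i,g}^*}, represented
   as formal finite sums of rational multiples of words. Two representatives
   denote the same element of F iff they have the same coefficients [coef]. *)
Definition word := seq letter.
Definition fpoly := seq (rat * word).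

Definition coef (p : fpoly) (w : word) : rat := \sum_(t <- p | t.2 == w) t.1.

Definition ldeg (l : letter) : gT := if lstar l then ((lgrp l)^-1)%g else lgrp l.
Definition wdeg (w : word) : gT := (\prod_(l <- w) ldeg l)%g.
Definition homogeneous (g : gT) (p : fpoly) : Prop :=
  forall w, coef p w != 0 -> wdeg w = g.

Definition padd (p q : fpoly) : fpoly := p ++ q.
Definition pscale (c : rat) (p : fpoly) : fpoly := [seq (c * t.1, t.2) | t <- p].
Definition pmul (p q : fpoly) : fpoly :=
  [seq (t.1 * u.1, t.2 ++ u.2) | t <- p, u <- q].
Definition pone : fpoly := [:: (1, [::])].

Definition lflip (l : letter) : letter := (l.1, ~~ l.2).
Definition wstar (w : word) : word := rev (map lflip w).
Definition pstar (p : fpoly) : fpoly := [seq (t.1, wstar t.2) | t <- p].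

Definition lsubst (phi : nat -> gT -> fpoly) (l : letter) : fpoly :=
  if lstar l then pstar (phi (lidx l) (lgrp l)) else phi (lidx l) (lgrp l).
Definition wsubst (phi : nat -> gT -> fpoly) (w : word) : fpoly :=
  foldr (fun l acc => pmul (lsubst phi l) acc) pone w.
Definition psubst (phi : nat -> gT -> fpoly) (p : fpoly) : fpoly :=
  flatten [seq pscale t.1 (wsubst phi t.2) | t <- p].

Inductive TstarIdeal (S : fpoly -> Prop) : fpoly -> Prop :=
| TSI_gen f : S f -> TstarIdeal S f
| TSI_ext f h : TstarIdeal S f -> (forall w, coef f w = coef h w) -> TstarIdeal S h
| TSI_zero : TstarIdeal S [::]
| TSI_add f h : TstarIdeal S f -> TstarIdeal S h -> TstarIdeal S (padd f h)
| TSI_scale c f : TstarIdeal S f -> TstarIdeal S (pscale c f)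
| TSI_mull p f : TstarIdeal S f -> TstarIdeal S (pmul p f)
| TSI_mulr p f : TstarIdeal S f -> TstarIdeal S (pmul f p)
| TSI_star f : TstarIdeal S f -> TstarIdeal S (pstar f)
| TSI_subst (phi : nat -> gT -> fpoly) f :
    (forall i g, homogeneous g (phi i g)) ->
    TstarIdeal S f -> TstarIdeal S (psubst phi f).

(* M_k(C), k = |G|; rows and columns indexed by G through enum_val.
   C is represented by algC (the algebraic closure of Q in C). *)
Definition mat := 'M[algC]_#|gT|.
Definition gidx (i : 'I_#|gT|) : gT := enum_val i.

Definition Pmat (g : gT) : mat :=
  \matrix_(i, j) (gidx j == (gidx i * g)%g)%:R.

Definition in_component (g : gT) (A : mat) : Prop :=
  exists d : 'rV[algC]_#|gT|, A = diag_mx d *m Pmat g.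

Definition leval (A : nat -> gT -> mat) (l : letter) : mat :=
  if lstar l then (A (lidx l) (lgrp l))^T else A (lidx l) (lgrp l).
Definition weval (A : nat -> gT -> mat) (w : word) : mat :=
  \big[mulmx/1%:M]_(l <- w) leval A l.
Definition peval (A : nat -> gT -> mat) (p : fpoly) : mat :=
  \sum_(t <- p) ratr t.1 *: weval A t.2.

Definition graded_star_identity (f : fpoly) : Prop :=
  forall A : nat -> gT -> mat, (forall i g, in_component g (A i g)) ->
    peval A f = 0.

(* alpha(x_{1,s_1} ... x_{n,s_n}) for alpha = (pi, gamma) in W_n = S_n x C_2^n;
   gamma is encoded as a bool vector, true meaning gamma_j = -1. *)
Definition alpha_word (n : nat) (sigma : 'I_n -> gT) (pi : {perm 'I_n})
    (gamma : {ffun 'I_n -> bool}) : word :=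
  [seq ((val (pi j)).+1, sigma (pi j), gamma (pi j)) | j <- enum 'I_n].

Definition Wn_form (f : fpoly) : Prop :=
  exists (n : nat) (sigma : 'I_n -> gT)
         (a : {perm 'I_n} -> {ffun 'I_n -> bool} -> rat),
    (1 <= n)%N /\
    f = [seq (a pi gamma, alpha_word sigma pi gamma)
          | pi <- enum {perm 'I_n}, gamma <- enum {ffun 'I_n -> bool}].

End FreeStarAlg.

(* Main.v *)
Require Import Defs.
From HB Require Import structures.
From mathcomp Require Import all_boot all_order all_fingroup all_algebra all_field.
From mathcomp Require Import zify.
Set Implicit Arguments. Unset Strict Implicit. Unset Printing Implicit Defensive.
Import Order.TTheory GRing.Theory Num.Theory.
Local Open Scope ring_scope.

Section S.
Variable gT : finGroupType.
Implicit Types (p q : fpoly gT) (w : word gT) (l : letter gT).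

Lemma coef_nil w : coef (gT:=gT) [::] w = 0.
Proof. by rewrite /coef big_nil. Qed.
Lemma coef_cons t p w : coef (t :: p) w = (if t.2 == w then t.1 else 0) + coef p w.
Proof. by rewrite /coef big_cons; case: ifP; rewrite ?add0r. Qed.
Lemma coef_cat p q w : coef (p ++ q) w = coef p w + coef q w.
Proof. by rewrite /coef big_cat. Qed.
Lemma coef_pscale c p w : coef (pscale c p) w = c * coef p w.
Proof. by rewrite /coef big_map mulr_sumr. Qed.
Lemma coef_flatten (ps : seq (fpoly gT)) w : coef (flatten ps) w = \sum_(p <- ps) coef p w.
Proof. by elim: ps => [|p ps IH]; rewrite ?big_nil ?coef_nil //= coef_cat big_cons IH. Qed.
Lemma coef_eq0 p w : w \notin map snd p -> coef p w = 0.
Proof.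
elim: p => [|t p IH]; rewrite ?coef_nil //= inE negb_or coef_cons => /andP[h1 h2].
by rewrite IH // eq_sym (negbTE h1) addr0.
Qed.

Definition Comp (g : gT) (A : mat gT) := forall i j, A i j != 0 -> gidx j = (gidx i * g)%g.

Lemma compP g A : in_component g A <-> Comp g A.
Proof.
split.
  move=> [d ->] i j; rewrite mul_diag_mx mxE /Pmat mxE.
  by case: (gidx j =P _) => // _; rewrite mulr0 eqxx.
move=> H; exists (\row_i A i (enum_rank (gidx i * g)%g)).
apply/matrixP => i j; rewrite mul_diag_mx !mxE.
case: eqP => [E|NE].
  rewrite mulr1; congr (A i _); apply: enum_val_inj; rewrite enum_rankK.
  by rewrite -E.
rewrite mulr0; apply/eqP; apply: contraT => /H E; by case: NE.
Qed.

Lemma Comp0 g : Comp g 0.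
Proof. by move=> i j; rewrite mxE eqxx. Qed.
Lemma CompD g A B : Comp g A -> Comp g B -> Comp g (A + B).
Proof.
move=> HA HB i j; rewrite mxE => h.
case: (A i j =P 0) => [E|/eqP]; last exact: HA.
by apply: HB; rewrite E add0r in h.
Qed.
Lemma CompZ g c A : Comp g A -> Comp g (c *: A).
Proof. by move=> HA i j; rewrite mxE mulf_eq0 negb_or => /andP[_]; apply: HA. Qed.
Lemma Comp_sum I (r : seq I) (F : I -> mat gT) g :
  (forall i, Comp g (F i)) -> Comp g (\sum_(i <- r) F i).
Proof.
move=> H; elim: r => [|a r IH]; rewrite ?big_nil ?big_cons; first exact: Comp0.
exact: CompD.
Qed.
Lemma CompM g h A B : Comp g A -> Comp h B -> Comp (g * h) (A *m B).
Proof.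
move=> HA HB i j; rewrite mxE => /eqP h0.
have [k _ /andP[]] : exists2 k, true & (A i k != 0) && (B k j != 0).
  apply/exists_inP; apply: contraT; rewrite negb_exists_in => /forall_inP H.
  case: h0; apply: big1 => k _.
  by have := H k isT; rewrite negb_and => /orP[]/negPn/eqP->; rewrite ?mul0r ?mulr0.
by move=> /HA E1 /HB E2; rewrite E2 E1 mulgA.
Qed.
Lemma Comp_tr g A : Comp g A -> Comp g^-1 A^T.
Proof. by move=> HA i j; rewrite mxE => /HA ->; rewrite mulgK. Qed.
Lemma Comp1 : Comp 1 (1%:M : mat gT).
Proof. by move=> i j; rewrite mxE mulg1; case: (i =P j) => [->|_] //; rewrite eqxx. Qed.


Section Eval.
Variable A : nat -> gT -> mat gT.

Lemma weval_nil : weval A [::] = 1%:M.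
Proof. by rewrite /weval big_nil. Qed.
Lemma weval_cons l w : weval A (l :: w) = leval A l *m weval A w.
Proof. by rewrite /weval big_cons. Qed.
Lemma weval_cat v w : weval A (v ++ w) = weval A v *m weval A w.
Proof.
elim: v => [|l v IH] /=; first by rewrite weval_nil mul1mx.
by rewrite !weval_cons IH mulmxA.
Qed.
Lemma leval_flip l : leval A (lflip l) = (leval A l)^T.
Proof. by case: l => [[i g] []]; rewrite /leval /lflip /lstar /lidx /lgrp /= ?trmxK. Qed.
Lemma weval_wstar w : weval A (wstar w) = (weval A w)^T.
Proof.
elim: w => [|l w IH]; first by rewrite /wstar /= weval_nil trmx1.
rewrite /wstar /= rev_cons -cats1 weval_cat -/(wstar w) IH !weval_cons weval_nil.
by rewrite mulmx1 trmx_mul leval_flip.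
Qed.

Lemma peval_nil : peval A [::] = 0.
Proof. by rewrite /peval big_nil. Qed.
Lemma peval_cons t p : peval A (t :: p) = ratr t.1 *: weval A t.2 + peval A p.
Proof. by rewrite /peval big_cons. Qed.
Lemma peval_cat p q : peval A (p ++ q) = peval A p + peval A q.
Proof. by rewrite /peval big_cat. Qed.
Lemma peval_scale c p : peval A (pscale c p) = ratr c *: peval A p.
Proof.
rewrite /peval big_map scaler_sumr; apply: eq_bigr => t _.
by rewrite rmorphM scalerA.
Qed.
Lemma peval_mul p q : peval A (pmul p q) = peval A p *m peval A q.
Proof.
rewrite /pmul /peval big_allpairs_dep mulmx_suml; apply: eq_bigr => t _.
rewrite mulmx_sumr; apply: eq_bigr => u _ /=.
by rewrite weval_cat rmorphM -scalemxAl -scalemxAr scalerA.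
Qed.
Lemma peval_star p : peval A (pstar p) = (peval A p)^T.
Proof.
elim: p => [|t p IH]; first by rewrite /pstar /= peval_nil; apply/matrixP=> i j; rewrite !mxE.
rewrite /pstar /= peval_cons -/(pstar p) IH weval_wstar peval_cons.
by apply/matrixP=> i j; rewrite !mxE.
Qed.
Lemma peval_coef p s : uniq s -> {subset map snd p <= s} ->
  peval A p = \sum_(w <- s) ratr (coef p w) *: weval A w.
Proof.
move=> us; elim: p => [|t p IH] sub.
  by rewrite peval_nil big1 // => w _; rewrite coef_nil rmorph0 scale0r.
rewrite peval_cons IH; last by move=> w hw; apply: sub; rewrite inE hw orbT.
have ts : t.2 \in s by apply: sub; rewrite inE eqxx.
rewrite [X in _ = X](eq_bigr (fun w => ratr (if t.2 == w then t.1 else 0) *: weval A w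
   + ratr (coef p w) *: weval A w)); last by move=> w _; rewrite coef_cons rmorphD scalerDl.
rewrite big_split /=; congr (_ + _).
rewrite (bigD1_seq t.2) //= eqxx big1 ?addr0 // => w; rewrite eq_sym => /negbTE ->.
by rewrite rmorph0 scale0r.
Qed.
Lemma peval_ext p q : (forall w, coef p w = coef q w) -> peval A p = peval A q.
Proof.
move=> H; rewrite (@peval_coef p (undup (map snd (p ++ q)))) ?undup_uniq //; last first.
  by move=> w; rewrite mem_undup map_cat mem_cat => ->.
rewrite (@peval_coef q (undup (map snd (p ++ q)))) ?undup_uniq //; last first.
  by move=> w; rewrite mem_undup map_cat mem_cat => ->; rewrite orbT.
by apply: eq_bigr => w _; rewrite H.
Qed.
End Eval.

Lemma wdeg_nil : wdeg (gT:=gT) [::] = 1%g.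
Proof. by rewrite /wdeg big_nil. Qed.
Lemma wdeg_cons l w : wdeg (l :: w) = (ldeg l * wdeg w)%g.
Proof. by rewrite /wdeg big_cons. Qed.

Lemma weval_comp A w : (forall i g, Comp g (A i g)) -> Comp (wdeg w) (weval A w).
Proof.
move=> HA; elim: w => [|l w IH]; first by rewrite weval_nil wdeg_nil; exact: Comp1.
rewrite weval_cons wdeg_cons; apply: CompM => //.
rewrite /leval /ldeg; case: (lstar l) => //; exact: Comp_tr.
Qed.

Lemma peval_comp A g p : (forall i g, Comp g (A i g)) -> homogeneous g p ->
  Comp g (peval A p).
Proof.
move=> HA Hp; rewrite (@peval_coef A p (undup (map snd p))) ?undup_uniq //; last first.
  by move=> w; rewrite mem_undup.
apply: Comp_sum => w; case: (coef p w =P 0) => [->|/eqP /Hp E].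
  by rewrite rmorph0 scale0r; exact: Comp0.
by apply: CompZ; rewrite -E; exact: weval_comp.
Qed.

Lemma peval_wsubst A phi w :
  peval A (wsubst phi w) = weval (fun i g => peval A (phi i g)) w.
Proof.
elim: w => [|l w IH] /=.
  by rewrite weval_nil /pone peval_cons peval_nil addr0 rmorph1 scale1r weval_nil.
rewrite peval_mul IH weval_cons; congr (_ *m _).
by rewrite /lsubst /leval; case: (lstar l); rewrite ?peval_star.
Qed.
Lemma peval_psubst A phi p :
  peval A (psubst phi p) = peval (fun i g => peval A (phi i g)) p.
Proof.
elim: p => [|t p IH] /=; first by rewrite /psubst /= !peval_nil.
by rewrite /psubst /= peval_cat peval_scale -/(psubst phi p) IH peval_wsubst peval_cons.
Qed.

Lemma gsi_ext p q : graded_star_identity p -> (forall w, coef p w = coef q w) ->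
  graded_star_identity q.
Proof. by move=> Hp H A HA; rewrite -(peval_ext A H) Hp. Qed.

Lemma sound (S : fpoly gT -> Prop) f :
  (forall h, S h -> graded_star_identity h) ->
  TstarIdeal S f -> graded_star_identity f.
Proof.
move=> HS; elim => {f}.
- by move=> f /HS.
- by move=> f h _ IH H; apply: gsi_ext IH H.
- by move=> A _; rewrite peval_nil.
- by move=> f h _ IH1 _ IH2 A HA; rewrite /padd peval_cat IH1 // IH2 // addr0.
- by move=> c f _ IH A HA; rewrite peval_scale IH // scaler0.
- by move=> p f _ IH A HA; rewrite peval_mul IH // mulmx0.
- by move=> p f _ IH A HA; rewrite peval_mul IH // mul0mx.
- by move=> f _ IH A HA; rewrite peval_star IH // trmx0.
- move=> phi f Hphi _ IH A HA; rewrite peval_psubst; apply: IH => i g.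
  apply/compP; apply: peval_comp => // i' g'; exact/compP.
Qed.

Definition deg (y : nat * gT) (w : word gT) : nat := count_mem y (map (fun l : letter gT => l.1) w).
Lemma deg_nil y : deg y [::] = 0%N. Proof. by []. Qed.
Lemma deg_cons y l w : deg y (l :: w) = ((l.1 == y) + deg y w)%N. Proof. by []. Qed.
Lemma deg_cat y v w : deg y (v ++ w) = (deg y v + deg y w)%N.
Proof. by rewrite /deg map_cat count_cat. Qed.

Lemma coef_filter (Q : pred (word gT)) p w :
  coef [seq t <- p | Q t.2] w = if Q w then coef p w else 0.
Proof.
elim: p => [|t p IH] /=; first by rewrite coef_nil; case: ifP.
case: (t.2 =P w) => [E|NE]; case: ifP => Qt; rewrite ?coef_cons IH.
- by rewrite E eqxx -E Qt.
- by rewrite -E Qt.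
- by case: (t.2 =P w) => // _; rewrite !add0r.
- by case: (t.2 =P w) => // _; rewrite !add0r.
Qed.

Lemma coef_mapF (F : word gT -> rat) p w :
  coef [seq (t.1 * F t.2, t.2) | t <- p] w = F w * coef p w.
Proof.
rewrite /coef big_map mulr_sumr; apply: eq_bigr => t /eqP <-.
by rewrite mulrC.
Qed.

Definition rl (r : nat * gT -> nat * gT) (l : letter gT) : letter gT := (r l.1, l.2).
Definition mono (c : nat * gT -> rat) (r : nat * gT -> nat * gT) (i : nat) (g : gT) : fpoly gT :=
  [:: (c (i, g), [:: (r (i, g), false)])].

Lemma lsubst_mono c r l : lsubst (mono c r) l = [:: (c l.1, [:: rl r l])].
Proof. by case: l => [[i g] []]. Qed.
Lemma wsubst_mono c r w :
  wsubst (mono c r) w = [:: (\prod_(l <- w) c l.1, map (rl r) w)].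
Proof.
elim: w => [|l w IH] /=; first by rewrite big_nil.
by rewrite IH lsubst_mono big_cons.
Qed.
Lemma psubst_mono c r p :
  psubst (mono c r) p = [seq (t.1 * \prod_(l <- t.2) c l.1, map (rl r) t.2) | t <- p].
Proof.
elim: p => [|t p IH] //=.
by rewrite /psubst /= -/(psubst _ p) IH wsubst_mono.
Qed.

Lemma coef_single c (x : letter gT) w : coef [:: (c, [:: x])] w != 0 -> w = [:: x].
Proof. by rewrite coef_cons coef_nil addr0; case: ([:: x] =P w) => [<-|]; rewrite ?eqxx. Qed.

Lemma mono_homog c r : (forall y, (r y).2 = y.2) -> forall i g, homogeneous g (mono c r i g).
Proof.
move=> Hr i g w /coef_single ->.
by rewrite wdeg_cons wdeg_nil mulg1 /ldeg /lgrp /lstar /= Hr.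
Qed.

Definition scl (x : nat * gT) (lam : rat) := mono (fun y => if y == x then lam else 1) id.

Lemma rl_id : rl id =1 id. Proof. by case. Qed.

Lemma coef_scl x lam p w : coef (psubst (scl x lam) p) w = lam ^+ deg x w * coef p w.
Proof.
rewrite psubst_mono.
transitivity (coef [seq (t.1 * (lam ^+ deg x t.2), t.2) | t <- p] w);
  last exact: (coef_mapF (fun w => lam ^+ deg x w)).
congr coef; apply: eq_map => t /=; rewrite (eq_map rl_id) map_id; congr (_ * _, _).
elim: t.2 => [|l w' IH]; first by rewrite big_nil.
by rewrite big_cons IH deg_cons; case: eqP => //= _; rewrite ?exprS ?add0n ?mul1r.
Qed.

Lemma two_pow_neq (a b : nat) : a != b -> (2 : rat) ^+ a - 2 ^+ b != 0.
Proof.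
move=> ab; rewrite subr_eq0 -!natrX eqr_nat eqn_exp2l //.
Qed.

Section Extract.
Variable S : fpoly gT -> Prop.

Lemma extract_gen x d (D : seq nat) p : TstarIdeal S p ->
  (forall w, coef p w != 0 -> deg x w \in d :: D) ->
  exists q, TstarIdeal S q /\ forall w, coef q w = if deg x w == d then coef p w else 0.
Proof.
elim: D p => [|e D IH] p Hp Hs.
  exists p; split => // w; case: ifP => // hd; apply/eqP; apply: contraT => /Hs.
  by rewrite inE hd.
case: (e =P d) => [ed|/eqP ed].
  apply: IH => // w /Hs; rewrite !inE ed; by case: (_ == d).
pose p' := padd (psubst (scl x 2) p) (pscale (- 2 ^+ e) p).
have cp' w : coef p' w = (2 ^+ deg x w - 2 ^+ e) * coef p w.
  by rewrite /p' /padd coef_cat coef_scl coef_pscale mulrBl mulNr.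
have Jp' : TstarIdeal S p'.
  apply: TSI_add; last exact: TSI_scale.
  apply: TSI_subst => //; apply: mono_homog => //.
have [q' [Jq' Hq']] : exists q, TstarIdeal S q /\
    forall w, coef q w = if deg x w == d then coef p' w else 0.
  apply: IH => // w; rewrite cp' mulf_eq0 negb_or => /andP[h1 /Hs].
  rewrite !inE; case/or3P => [->//|/eqP E|->]; last by rewrite orbT.
  by rewrite E subrr eqxx in h1.
exists (pscale (2 ^+ d - 2 ^+ e)^-1 q'); split; first exact: TSI_scale.
move=> w; rewrite coef_pscale Hq' cp'.
case: (deg x w =P d) => [->|]; last by rewrite mulr0.
by rewrite mulrA mulVf ?mul1r //; apply: two_pow_neq; rewrite eq_sym.
Qed.

Lemma extract x d p : TstarIdeal S p ->
  exists q, TstarIdeal S q /\ forall w, coef q w = if deg x w == d then coef p w else 0.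
Proof.
move=> Hp; apply: (@extract_gen x d [seq deg x w | w <- map snd p]) => // w hw.
rewrite inE map_f ?orbT //; apply: contraT => /coef_eq0 E.
by rewrite E eqxx in hw.
Qed.

Lemma mextract (ys : seq (nat * gT)) (ds : seq nat) p : TstarIdeal S p ->
  exists q, TstarIdeal S q /\
    forall w, coef q w = if [seq deg y w | y <- ys] == ds then coef p w else 0.
Proof.
elim: ys ds p => [|y ys IH] [|d ds] p Hp.
- by exists p.
- by exists [::]; split; [exact: TSI_zero | move=> w; rewrite coef_nil].
- by exists [::]; split; [exact: TSI_zero | move=> w; rewrite coef_nil].
- have [q1 [J1 H1]] := extract y d Hp.
  have [q [J H]] := IH ds q1 J1.
  exists q; split => // w; rewrite H H1 /= eqseq_cons.
  by case: (deg y w == d); case: (_ == ds).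
Qed.
End Extract.

Lemma coef_consmap (a : letter gT) p w :
  coef [seq (t.1, a :: t.2) | t <- p] w =
  if w is b :: w' then (if b == a then coef p w' else 0) else 0.
Proof.
rewrite /coef big_map; case: w => [|b w'].
  by rewrite big1.
case: (b =P a) => [->|ne].
  by apply: eq_bigl => t /=; rewrite eqseq_cons eqxx.
by rewrite big1 // => t /=; rewrite eqseq_cons => /andP[/eqP E _]; case: ne.
Qed.

Lemma pmul1 (a : letter gT) p : pmul [:: (1, [:: a])] p = [seq (t.1, a :: t.2) | t <- p].
Proof. by rewrite /pmul /= cats0; apply: eq_map => t; rewrite mul1r. Qed.

Lemma pmul2 (a b : letter gT) p : pmul [:: (1, [:: a]); (1, [:: b])] p =
  [seq (t.1, a :: t.2) | t <- p] ++ [seq (t.1, b :: t.2) | t <- p].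
Proof. by rewrite /pmul /= cats0; congr (_ ++ _); apply: eq_map => t; rewrite mul1r. Qed.

Section Lin.
Variables (x u : nat * gT).
Hypothesis ux : u.2 = x.2.
Hypothesis neq_ux : u != x.

Definition psi (i : nat) (g : gT) : fpoly gT :=
  if (i, g) == x then [:: (1, [:: (x, false)]); (1, [:: (u, false)])]
  else [:: (1, [:: ((i, g), false)])].

Lemma psi_homog i g : homogeneous g (psi i g).
Proof.
rewrite /psi; case: eqP => [E|_] w; last first.
  by move/coef_single ->; rewrite wdeg_cons wdeg_nil mulg1.
rewrite !coef_cons coef_nil addr0.
case: ([:: (x, false)] =P w) => [<-|_]; first by rewrite wdeg_cons wdeg_nil mulg1 /ldeg /= -E.
case: ([:: (u, false)] =P w) => [<-|_]; last by rewrite addr0 eqxx.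
by rewrite wdeg_cons wdeg_nil mulg1 /ldeg /lgrp /= ux -E.
Qed.

Definition lu (l : letter gT) : letter gT := (u, l.2).

Lemma lsubst_psi l : lsubst psi l =
  if l.1 == x then [:: (1, [:: l]); (1, [:: lu l])] else [:: (1, [:: l])].
Proof.
case: l => [[i g] b]; rewrite /lsubst /psi /lstar /lidx /lgrp /=.
by case: ((i, g) =P x) => [->|_]; case: b.
Qed.

Fixpoint lin (w : word gT) : seq (word gT) :=
  if w is l :: w' then
    if l.1 == x then (lu l :: w') :: map (cons l) (lin w')
    else map (cons l) (lin w')
  else [::].

Definition lpoly (w : word gT) : fpoly gT := [seq (1, v) | v <- lin w].

Lemma lpoly_cons l w : lpoly (l :: w) =
  (if l.1 == x then [:: (1, lu l :: w)] else [::]) ++ [seq (t.1, l :: t.2) | t <- lpoly w].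
Proof.
rewrite /lpoly /=; case: ifP => _ /=; by rewrite -!map_comp.
Qed.

Lemma lin_coef w0 : deg u w0 = 0%N -> forall w,
  (deg u w = 0%N -> coef (wsubst psi w0) w = if w == w0 then 1 else 0) /\
  (deg u w = 1%N -> coef (wsubst psi w0) w = coef (lpoly w0) w).
Proof.
elim: w0 => [|l w0 IH] hu w.
  rewrite /= /pone coef_cons /lpoly /= !coef_nil addr0 eq_sym.
  split => // hd; case: (w =P [::]) => // E.
  by rewrite E in hd.
rewrite deg_cons in hu; move: hu.
case: (l.1 =P u) => // lu_ne; rewrite add0n => hu.
have IH' := IH hu.
rewrite /= lsubst_psi lpoly_cons.
have lul : (l == lu l) = false.
  by apply/eqP => /(congr1 fst) /= E; case: lu_ne; rewrite E.
case: (l.1 =P x) => [lx|lx].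
- rewrite pmul2 coef_cat !coef_consmap coef_cat coef_cons coef_nil addr0 coef_consmap.
  case: w => [|b w] /=.
    by split => // _; rewrite addr0.
  rewrite deg_cons !eqseq_cons.
  case: (b =P l) => [->|/eqP bl].
    rewrite lul (introF eqP lu_ne) add0n addr0 /= [lu l == l]eq_sym lul /= add0r.
    by have [h0 h1] := IH' w; split => hd; [rewrite h0 | rewrite h1].
  rewrite add0r.
  case: (b =P lu l) => [->|/eqP blu].
    rewrite /= eqxx add1n; split => // [[hd]].
    by have [h0 _] := IH' w; rewrite h0 // addr0 eqxx /= eq_sym.
  rewrite [lu l == b]eq_sym (negbTE blu) /=.
  by split => // _; rewrite addr0.
- rewrite pmul1 coef_consmap /= coef_consmap.
  case: w => [|b w] //=.
  rewrite deg_cons eqseq_cons.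
  case: (b =P l) => [->|bl] /=; last by split.
  rewrite (introF eqP lu_ne) add0n.
  by have [h0 h1] := IH' w; split => hd; [rewrite h0 | rewrite h1].
Qed.

Lemma lin_degs w0 v : deg u w0 = 0%N -> v \in lin w0 ->
  forall y, (deg y v + (x == y) = deg y w0 + (u == y))%N.
Proof.
elim: w0 v => [|l w0 IH] v //= hu.
rewrite deg_cons in hu; move: hu; case: (l.1 =P u) => // lne; rewrite add0n => hu.
case: (l.1 =P x) => [lx|lx].
  rewrite inE => /orP[/eqP ->|/mapP[v' hv' ->]] y; rewrite !deg_cons /=.
    by rewrite lx; move: (u == y) (x == y) (deg y w0) => a b c; lia.
  by rewrite -!addnA IH.
move=> /mapP[v' hv' ->] y; by rewrite !deg_cons -!addnA IH.
Qed.

Lemma lin_degu w0 v : deg u w0 = 0%N -> v \in lin w0 -> deg u v = 1%N.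
Proof.
move=> hu hv; have := lin_degs hu hv u.
by rewrite hu eqxx eq_sym (negbTE neq_ux) addn0.
Qed.

Lemma size_lin w0 : size (lin w0) = deg x w0.
Proof.
elim: w0 => [|l w0 IH] //=; rewrite deg_cons.
by case: (l.1 =P x) => _ /=; rewrite size_map IH.
Qed.

Definition chi := mono (fun _ => 1) (fun y => if y == u then x else y).

Lemma chi_homog i g : homogeneous g (chi i g).
Proof. by apply: mono_homog => y; case: (y =P u) => [->|]. Qed.

Lemma lin_back w0 v : deg u w0 = 0%N -> v \in lin w0 ->
  map (rl (fun y => if y == u then x else y)) v = w0.
Proof.
elim: w0 v => [|l w0 IH] v //= hu.
rewrite deg_cons in hu; move: hu; case: (l.1 =P u) => // lne; rewrite add0n => hu.
have idw0 : map (rl (fun y => if y == u then x else y)) w0 = w0.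
  rewrite -[RHS]map_id; apply/eq_in_map => l' hl'; rewrite /rl.
  case: (l'.1 =P u) => [E|_]; last by case: l' hl'.
  have : (0 < deg u w0)%N.
    rewrite /deg -has_count has_pred1 -E; exact: map_f.
  by rewrite hu.
have idl : rl (fun y => if y == u then x else y) l = l.
  by rewrite /rl (introF eqP lne); case: l {lne}.
case: (l.1 =P x) => [lx|lx].
  rewrite inE => /orP[/eqP ->|/mapP[v' hv' ->]] /=.
    by rewrite idw0 /rl /= eqxx -lx; case: l {lne lx idl}.
  by rewrite idl IH.
by move=> /mapP[v' hv' ->] /=; rewrite idl IH.
Qed.

Definition hlin (f : fpoly gT) : fpoly gT := flatten [seq pscale t.1 (lpoly t.2) | t <- f].

Lemma coef_flatten_scale (F : word gT -> fpoly gT) f w :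
  coef (flatten [seq pscale t.1 (F t.2) | t <- f]) w = \sum_(t <- f) t.1 * coef (F t.2) w.
Proof. by rewrite coef_flatten big_map; apply: eq_bigr => t _; rewrite coef_pscale. Qed.

Lemma coef_hlin f w : (forall t, t \in f -> deg u t.2 = 0%N) ->
  coef (hlin f) w = if deg u w == 1%N then coef (psubst psi f) w else 0.
Proof.
move=> hf; rewrite /hlin /psubst !coef_flatten_scale.
case: (deg u w =P 1%N) => [h1|h1].
  rewrite big_seq_cond [RHS]big_seq_cond; apply: eq_bigr => t /andP[ht _].
  by have [_ ->] := lin_coef (hf t ht) w.
rewrite big_seq_cond big1 // => t /andP[ht _]; rewrite coef_eq0 ?mulr0 //.
rewrite /lpoly -map_comp map_id; apply/negP => hw; apply: h1.
exact: lin_degu (hf t ht) hw.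
Qed.

Lemma sum_const_cond (L : seq (word gT)) (b : bool) (c : rat) :
  \sum_(v <- L | b) c = if b then (size L)%:R * c else 0.
Proof.
elim: L => [|v L IH]; first by rewrite big_nil; case: b; rewrite ?mul0r.
by rewrite big_cons IH; case: b IH => //= _; rewrite -add1n natrD mulrDl mul1r.
Qed.

Lemma coef_back f w d : (forall t, t \in f -> deg u t.2 = 0%N) ->
  (forall t, t \in f -> deg x t.2 = d) ->
  coef (psubst chi (hlin f)) w = d%:R * coef f w.
Proof.
move=> hu hd; rewrite psubst_mono /coef big_map /hlin big_flatten big_map.
rewrite mulr_sumr [RHS]big_mkcond big_seq_cond [RHS]big_seq_cond.
apply: eq_bigr => t /andP[ht _].
rewrite /pscale /lpoly -map_comp big_map /= big_seq_cond.
rewrite (eq_bigl (fun v => (v \in lin t.2) && (t.2 == w))); last first.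
  by move=> v /=; case hv: (v \in lin t.2) => //=; rewrite (lin_back (hu t ht) hv).
rewrite (eq_bigr (fun _ => t.1)); last by move=> v _; rewrite big1_eq !mulr1.
rewrite -(big_seq_cond (fun v => t.2 == w)) sum_const_cond size_lin hd //.
Qed.


End Lin.

Definition homog (f : fpoly gT) := forall y t t', t \in f -> t' \in f -> deg y t.2 = deg y t'.2.
Definition rep (w : word gT) := (size w - size (undup (map fst w)))%N.
Definition SS (h : fpoly gT) := graded_star_identity h /\ Wn_form h.

Lemma mem_deg y w : (y \in map fst w) = (0 < deg y w)%N.
Proof. by rewrite /deg -has_count has_pred1. Qed.

Lemma not_uniq_dup (s : seq (nat * gT)) : ~~ uniq s -> exists2 y, y \in s & (1 < count_mem y s)%N.
Proof.
move=> nu; case: (boolP (all (fun y => count_mem y s <= 1)%N s)) => [H|].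
  case/negP: nu; apply: count_mem_uniq => y; case: (boolP (y \in s)) => hy.
    apply/eqP; rewrite eqn_leq (allP H y hy) /= -has_count has_pred1 //.
  exact/count_memPn.
by case/allPn => y hy; rewrite -ltnNge => h; exists y.
Qed.

Definition maxidx (f : fpoly gT) : nat := foldr maxn 0%N [seq l.1.1 | l <- flatten (map snd f)].

Lemma maxidx_ge (f : fpoly gT) (t : rat * word gT) (l : letter gT) : t \in f -> l \in t.2 -> (l.1.1 <= maxidx f)%N.
Proof.
move=> ht hl; have : l \in flatten (map snd f) by apply/flattenP; exists t.2 => //; exact: map_f.
rewrite /maxidx; elim: (flatten _) => [|a r IH] //=; rewrite inE => /orP[/eqP ->|/IH].
  exact: leq_maxl.
by move=> h; apply: leq_trans h (leq_maxr _ _).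
Qed.

Lemma gsi_subst phi (f : fpoly gT) : (forall i g, homogeneous g (phi i g)) ->
  graded_star_identity f -> graded_star_identity (psubst phi f).
Proof.
move=> Hphi Hf; apply: (@sound (@graded_star_identity gT)) => //.
by apply: TSI_subst => //; exact: TSI_gen.
Qed.

Lemma size_lin_mem x u w0 v : v \in lin x u w0 -> size v = size w0.
Proof.
elim: w0 v => [|l w0 IH] v //=; case: ifP => _.
  by rewrite inE => /orP[/eqP ->|/mapP[v' /IH hv ->]] //=; rewrite hv.
by move=> /mapP[v' /IH hv ->] /=; rewrite hv.
Qed.

Lemma mem_hlin x u f t' : t' \in hlin x u f -> exists2 t, t \in f & t'.2 \in lin x u t.2.
Proof.
case/flattenP => p /mapP[t ht ->] /mapP[t'' /mapP[v hv ->] ->] /=.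
by exists t.
Qed.

Lemma step n (IH : forall f, graded_star_identity f -> homog f ->
      (forall t, t \in f -> rep t.2 = n) -> TstarIdeal SS f) f :
  graded_star_identity f -> homog f -> (forall t, t \in f -> rep t.2 = n.+1) ->
  TstarIdeal SS f.
Proof.
case: f => [|t0 f0]; first by move=> *; exact: TSI_zero.
set f := t0 :: f0 => gf hf rf.
have t0f : t0 \in f by rewrite inE eqxx.
have : ~~ uniq (map fst t0.2).
  by rewrite -ltn_size_undup; have := rf t0 t0f; rewrite /rep size_map => E; rewrite -subn_gt0 E.
case/not_uniq_dup => x hx cx.
pose u := ((maxidx f).+1, x.2).
have ux : u.2 = x.2 by [].
have hu : forall t, t \in f -> deg u t.2 = 0%N.
  move=> t ht; apply/count_memPn; apply/mapP => [[l hl E]].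
  by have := maxidx_ge ht hl; rewrite -E /= ltnn.
have neq_ux : u != x.
  apply/eqP => E; case/mapP: hx => l hl E'.
  by have := maxidx_ge t0f hl; rewrite -E' -E /= ltnn.
pose d := deg x t0.2.
have hd : forall t, t \in f -> deg x t.2 = d by move=> t ht; rewrite /d (hf x t t0).
have d2 : (1 < d)%N by [].
pose h := hlin x u f.
have [q [Jq Hq]] := extract u 1%N (TSI_subst (@psi_homog x u ux) (TSI_gen (S := @graded_star_identity gT) gf)).
have gh : graded_star_identity h.
  apply: (gsi_ext (sound (fun h H => H) Jq)) => w.
  by rewrite Hq /h coef_hlin.
have homh : homog h.
  move=> y t1 t2 /mem_hlin[s1 hs1 hv1] /mem_hlin[s2 hs2 hv2].
  have e1 := lin_degs neq_ux (hu s1 hs1) hv1 y.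
  have e2 := lin_degs neq_ux (hu s2 hs2) hv2 y.
  by apply/eqP; rewrite -(eqn_add2r (x == y)) e1 e2 (hf y s1 s2).
have reph : forall t, t \in h -> rep t.2 = n.
  move=> t /mem_hlin[s hs hv].
  have E := lin_degs neq_ux (hu s hs) hv.
  have U : perm_eq (undup (map fst t.2)) (u :: undup (map fst s.2)).
    apply: uniq_perm; rewrite /= ?undup_uniq ?mem_undup ?mem_deg ?hu ?andbT //.
    move=> y; rewrite inE !mem_undup !mem_deg.
    case: (y =P u) => [->|yu] /=.
      by rewrite (lin_degu neq_ux (hu s hs) hv).
    have := E y; case: (x =P y) => [<-|_].
      rewrite (hd s hs) (negbTE neq_ux) addn0 addn1 => E'.
      have -> : (0 < deg x t.2)%N by rewrite -ltnS E'.
      by rewrite (ltnW d2).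
    by rewrite !addn0 => ->; case: (u =P y) => [E0|_]; [case: yu; rewrite E0 | rewrite addn0].
  have := rf s hs; rewrite /rep (perm_size U) (size_lin_mem hv) /=; lia.
have Jh := IH h gh homh reph.
apply: (TSI_ext (f := pscale (d%:R)^-1 (psubst (chi x u) h))).
  apply: TSI_scale; apply: TSI_subst => //; move=> i g; exact: chi_homog.
move=> w; rewrite coef_pscale /h (coef_back w hu hd).
by rewrite mulrA mulVf ?mul1r // pnatr_eq0 -lt0n; lia.
Qed.

Section Base.
Variable vs : seq (nat * gT).
Hypothesis uvs : uniq vs.
Local Notation n := (size vs).
Definition y0 : nat * gT := (0%N, 1%g).
Definition l0 : letter gT := (y0, false).
Definition sig (j : 'I_n) : gT := (nth y0 vs j).2.
Definition rn (y : nat * gT) : nat * gT := if y \in vs then ((index y vs).+1, y.2) else y.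
Definition rn' (y : nat * gT) : nat * gT :=
  if (0 < y.1 <= n)%N && (y.2 == (nth y0 vs y.1.-1).2) then nth y0 vs y.1.-1 else y.

Lemma rn2 y : (rn y).2 = y.2. Proof. by rewrite /rn; case: ifP. Qed.
Lemma rn'2 y : (rn' y).2 = y.2. Proof. by rewrite /rn'; case: ifP => // /andP[_ /eqP]. Qed.
Lemma rnK y : y \in vs -> rn' (rn y) = y.
Proof.
by move=> hy; rewrite /rn hy /rn' /= index_mem hy nth_index //= eqxx.
Qed.

Lemma alpha_inj (p p' : {perm 'I_n}) (g g' : {ffun 'I_n -> bool}) :
  alpha_word sig p g = alpha_word sig p' g' -> p = p' /\ g = g'.
Proof.
move=> E; have H := proj2 (eq_in_map _ _ _) E.
have Hp : p = p'.
  apply/permP => j; have := H j (mem_enum _ _) => -[hj _ _].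
  by apply: val_inj; exact: hj.
subst p'; split => //; apply/ffunP => i.
by move: (H (p^-1 i)%g (mem_enum _ _)); rewrite permKV; case.
Qed.

Lemma alpha_ex (s : word gT) : uniq (map fst s) -> perm_eq (map fst s) vs ->
  exists (pp : {perm 'I_n}) (gg : {ffun 'I_n -> bool}), map (rl rn) s = alpha_word sig pp gg.
Proof.
move=> us ps.
have sz : size s = n by rewrite -(perm_size ps) size_map.
have mv : forall k : 'I_n, nth y0 (map fst s) k \in vs.
  move=> k; rewrite -(perm_mem ps); apply: mem_nth; rewrite size_map sz; exact: ltn_ord.
have Hp : forall k : 'I_n, (index (nth y0 (map fst s) k) vs < n)%N.
  by move=> k; rewrite index_mem.
pose pf := fun k : 'I_n => Ordinal (Hp k).
have pinj : injective pf.
  move=> k1 k2 /(congr1 val) /= /(congr1 (nth y0 vs)); rewrite !nth_index //.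
  move/eqP; rewrite nth_uniq ?size_map ?sz // => /eqP; exact: val_inj.
pose g := [ffun i : 'I_n => (nth l0 s (index (nth y0 vs i) (map fst s))).2].
exists (perm pinj), g.
have es : [seq nth l0 s (val j) | j <- enum 'I_n] = s.
  by rewrite (map_comp (nth l0 s) val) val_enum_ord -sz -/(mkseq _ _) mkseq_nth.
rewrite -{1}es -map_comp /alpha_word; apply: eq_map => j /=.
rewrite permE /= /rl /rn.
have jl : (j < size s)%N by rewrite sz.
have E1 : (nth l0 s j).1 = nth y0 (map fst s) j by rewrite (nth_map l0).
rewrite E1 mv /sig /= nth_index // ffunE nth_index // index_uniq ?size_map //.
Qed.
End Base.

Lemma perm_count (T : eqType) (s1 s2 : seq T) :
  (forall y, count_mem y s1 = count_mem y s2) -> perm_eq s1 s2.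
Proof. by move=> H; apply/allP => y _ /=; rewrite H. Qed.

Lemma rep_eq w1 w2 : (forall y, deg y w1 = deg y w2) -> rep w1 = rep w2.
Proof.
move=> H; have P : perm_eq (map fst w1) (map fst w2) by apply: perm_count.
rewrite /rep -(size_map fst w1) -(size_map fst w2) (perm_size P).
by rewrite (perm_size (perm_undup (perm_mem P))).
Qed.

Lemma rep0_uniq w : rep w = 0%N -> uniq (map fst w).
Proof.
move/eqP; rewrite /rep subn_eq0 => h; apply: contraT; rewrite -ltn_size_undup size_map.
by rewrite ltnNge h.
Qed.

Definition Wlist (vs : seq (nat * gT)) (q : fpoly gT) : fpoly gT :=
  [seq (coef q (alpha_word (@sig vs) pp gg), alpha_word (@sig vs) pp gg)
     | pp <- enum {perm 'I_(size vs)}, gg <- enum {ffun 'I_(size vs) -> bool}].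

Lemma coefE p w : coef p w = \sum_(t <- p) if t.2 == w then t.1 else 0.
Proof. by rewrite /coef big_mkcond. Qed.

Lemma coef_W vs q : uniq vs ->
  (forall w, w \in map snd q -> exists pp gg, w = alpha_word (@sig vs) pp gg) ->
  forall w, coef (Wlist vs q) w = coef q w.
Proof.
move=> uvs Hq w; rewrite [LHS]coefE big_allpairs_dep /=.
case: (boolP [exists pp, exists gg, alpha_word (@sig vs) pp gg == w]).
  case/existsP => p0 /existsP [g0 /eqP E].
  rewrite (bigD1_seq p0) ?mem_enum ?enum_uniq //= (bigD1_seq g0) ?mem_enum ?enum_uniq //=.
  rewrite E eqxx big1 ?addr0; last first.
    move=> g1 hg; case: eqP => // E1; rewrite -E in E1.
    by have [_ E2] := alpha_inj E1; rewrite E2 eqxx in hg.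
  rewrite big1 ?addr0 // => p1 hp; apply: big1 => g1 _.
  case: eqP => // E1; rewrite -E in E1.
  by have [E2 _] := alpha_inj E1; rewrite E2 eqxx in hp.
move/existsPn => H.
rewrite big1; last first.
  move=> p1 _; apply: big1 => g1 _; move/existsPn: (H p1) => /(_ g1) /negbTE ->.
  by [].
rewrite coef_eq0 //; apply/negP => /Hq [pp [gg E]].
by move/existsPn: (H pp) => /(_ gg); rewrite E eqxx.
Qed.

Lemma comp0 g : in_component g (0 : mat gT).
Proof. by apply/compP; exact: Comp0. Qed.

Lemma base f : graded_star_identity f -> homog f -> (forall t, t \in f -> rep t.2 = 0%N) ->
  TstarIdeal SS f.
Proof.
case: f => [|t0 f0]; first by move=> *; exact: TSI_zero.
set f := t0 :: f0 => gf hf rf.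
have t0f : t0 \in f by rewrite inE eqxx.
pose vs := map fst t0.2.
have uvs : uniq vs by apply: rep0_uniq; exact: rf.
have pf : forall t, t \in f -> perm_eq (map fst t.2) vs.
  move=> t ht; apply: uniq_perm; [exact: rep0_uniq (rf t ht) | exact: uvs |].
  by move=> y; rewrite !mem_deg (hf y t t0).
case: (posnP (size vs)) => [sz0|szp].
  have nil : forall t, t \in f -> t.2 = [::].
    move=> t ht; apply/eqP; rewrite -size_eq0 -(size_map fst) (perm_size (pf t ht)).
    by rewrite sz0.
  have c0 : coef f [::] = 0.
    have := gf (fun _ _ => 0) (fun i g => comp0 g).
    rewrite (@peval_coef _ f [:: [::]]) //; last first.
      by move=> w /mapP[t ht ->]; rewrite (nil t ht) inE.
    rewrite big_seq1 weval_nil => /matrixP /(_ (enum_rank 1%g) (enum_rank 1%g)).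
    rewrite !mxE eqxx mulr1 => /eqP; rewrite fmorph_eq0 => /eqP //.
  apply: (TSI_ext (TSI_zero SS)) => w; rewrite coef_nil.
  case: (w =P [::]) => [->|nw]; first by rewrite c0.
  rewrite coef_eq0 //; apply/negP => /mapP[t ht E]; apply: nw; rewrite E; exact: nil.
pose h' := psubst (mono (fun _ => 1) (rn vs)) f.
have gh' : graded_star_identity h'.
  apply: gsi_subst => //; apply: mono_homog; exact: rn2.
have Hq : forall w, w \in map snd h' -> exists pp gg, w = alpha_word (@sig vs) pp gg.
  move=> w; rewrite /h' psubst_mono -map_comp => /mapP[t ht ->] /=.
  have [pp [gg E]] := alpha_ex (rep0_uniq (rf t ht)) (pf t ht).
  by exists pp, gg.
have cW := coef_W uvs Hq.
have J1 : TstarIdeal SS (Wlist vs h').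
  apply: TSI_gen; split.
    by apply: (gsi_ext gh') => w; rewrite cW.
  by exists (size vs), (@sig vs), (fun pp gg => coef h' (alpha_word (@sig vs) pp gg)).
have J2 : TstarIdeal SS h' by apply: (TSI_ext J1).
have J3 := TSI_subst (mono_homog (c := fun _ => 1) (@rn'2 vs)) J2.
apply: (TSI_ext J3) => w; congr coef.
rewrite /h' !psubst_mono -map_comp -[RHS]map_id; apply/eq_in_map => t ht /=.
rewrite !big1_eq !mulr1 -map_comp.
have -> : [seq (rl (rn' vs) \o rl (rn vs)) i | i <- t.2] = t.2.
  rewrite -[RHS]map_id; apply/eq_in_map => l hl /=; rewrite /rl /= rnK.
    by case: l hl.
  by rewrite -(perm_mem (pf t ht)); exact: map_f.
by case: t ht.
Qed.

Lemma mainB n f : graded_star_identity f -> homog f -> (forall t, t \in f -> rep t.2 = n) ->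
  TstarIdeal SS f.
Proof.
elim: n f => [|n IH] f; first exact: base.
exact: step.
Qed.

Lemma TSI_flatten (S : fpoly gT -> Prop) (ps : seq (fpoly gT)) :
  (forall p, p \in ps -> TstarIdeal S p) -> TstarIdeal S (flatten ps).
Proof.
elim: ps => [|p ps IH] H /=; first exact: TSI_zero.
apply: (TSI_add (f := p)); first by apply: H; rewrite inE eqxx.
by apply: IH => q hq; apply: H; rewrite inE hq orbT.
Qed.

Lemma homog_rep f : homog f -> f != [::] ->
  exists n, forall t, t \in f -> rep t.2 = n.
Proof.
case: f => [|t1 f0] // hf _; exists (rep t1.2) => t ht.
by apply: rep_eq => y; apply: hf => //; rewrite inE eqxx.
Qed.

Lemma complete f : graded_star_identity f -> TstarIdeal SS f.
Proof.
move=> gf.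
pose V := flatten [seq map fst t.2 | t <- f].
pose md := fun w : word gT => [seq deg y w | y <- V].
pose D := undup [seq md t.2 | t <- f].
have comp : forall d, TstarIdeal SS [seq t <- f | md t.2 == d].
  move=> d; set fd := [seq t <- f | md t.2 == d].
  have gfd : graded_star_identity fd.
    have [q [Jq Hq]] := mextract V d (TSI_gen (S := @graded_star_identity gT) gf).
    apply: (gsi_ext (sound (fun h H => H) Jq)) => w.
    by rewrite Hq /fd (coef_filter (fun w => md w == d)).
  have hfd : homog fd.
    move=> y t t'; rewrite !mem_filter => /andP[/eqP E1 ht] /andP[/eqP E2 ht'].
    case: (boolP (y \in V)) => hy.
      have hi : (index y V < size V)%N by rewrite index_mem.
      have := congr1 (nth 0%N ^~ (index y V)) (etrans E1 (esym E2)).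
      by rewrite /md !(nth_map y0) // nth_index.
    have z : forall s, s \in f -> deg y s.2 = 0%N.
      move=> s hs; apply/eqP; rewrite -leqn0 leqNgt -mem_deg; apply: contra hy => hm.
      by apply/flattenP; exists (map fst s.2) => //; apply: map_f.
    by rewrite !z.
  case: (eqVneq fd [::]) => [->|nfd]; first exact: TSI_zero.
  have [n hn] := homog_rep hfd nfd.
  exact: mainB hn.
apply: (TSI_ext (f := flatten [seq [seq t <- f | md t.2 == d] | d <- D])).
  by apply: TSI_flatten => p /mapP[d _ ->].
move=> w; rewrite coef_flatten big_map.
under eq_bigr => d _ do rewrite (coef_filter (fun w => md w == d)).
have uD : uniq D by apply: undup_uniq.
case: (coef f w =P 0) => [->|/eqP hw].
  by apply: big1 => d _; case: ifP.
have mD : md w \in D.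
  rewrite mem_undup; have : w \in map snd f.
    by apply: contraT => /coef_eq0 E; rewrite E eqxx in hw.
  by case/mapP => t ht ->; apply: map_f.
rewrite (bigD1_seq (md w)) //= eqxx big1 ?addr0 // => d.
by rewrite eq_sym => /negbTE ->.
Qed.

End S.

Theorem mainTheorem1 (gT : finGroupType) :
  forall f : fpoly gT,
    graded_star_identity f <->
    TstarIdeal (fun h => graded_star_identity h /\ Wn_form h) f.
Proof.
move=> f; split; first exact: complete.
by apply: sound => h [].
Qed.
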